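(* Let $R$ be a ring and $I$ a nil ideal of $R$. (i) $R$ is GWNC if, and only if, $R/I$ is GWNC. (ii) $R$ is GWNC if, and only if, $J(R)$ is nil and $R/J(R)$ is GWNC.
   Context: All rings are associative with identity; $J(R)$ is the Jacobson radical. For a ring $S$, $U(S)$, ${\rm Nil}(S)$, ${\rm Id}(S)$ denote units, nilpotents, idempotents. $S$ is GWNC if every $a\in S\setminus U(S)$ can be written as $a=q+e$ or $a=q-e$ with $q\in{\rm Nil}(S)$, $e\in{\rm Id}(S)$. *)

(* Defs.v *)
From HB Require Import structures.
From mathcomp Require Import all_boot all_algebra.
Set Implicit Arguments.
Unset Strict Implicit.
Unset Printing Implicit Defensive.
Import GRing.Theory.
Local Open Scope ring_scope.

Definition is_unit (R : pzRingType) (x : R) : Prop :=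
  exists y : R, x * y = 1 /\ y * x = 1.

Definition is_nilpotent (R : pzRingType) (x : R) : Prop :=
  exists n : nat, x ^+ n = 0.

Definition is_idempotent (R : pzRingType) (x : R) : Prop := x * x = x.

Definition GWNC (R : pzRingType) : Prop :=
  forall a : R, ~ is_unit a ->
    exists q e : R, is_nilpotent q /\ is_idempotent e /\ (a = q + e \/ a = q - e).

Definition is_ideal (R : pzRingType) (I : R -> Prop) : Prop :=
  [/\ I 0, (forall x y, I x -> I y -> I (x - y)),
      (forall r x, I x -> I (r * x)) & (forall r x, I x -> I (x * r))].

Definition is_left_ideal (R : pzRingType) (L : R -> Prop) : Prop :=
  [/\ L 0, (forall x y, L x -> L y -> L (x - y)) & (forall r x, L x -> L (r * x))].

Definition is_maximal_left_ideal (R : pzRingType) (L : R -> Prop) : Prop :=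
  [/\ is_left_ideal L, ~ L 1 &
      forall L' : R -> Prop, is_left_ideal L' -> (forall x, L x -> L' x) ->
        (forall x, L' x -> L x) \/ (forall x, L' x)].

Definition jacobson (R : pzRingType) : R -> Prop :=
  fun x => forall L : R -> Prop, is_maximal_left_ideal L -> L x.

Definition is_nil (R : pzRingType) (I : R -> Prop) : Prop :=
  forall x, I x -> is_nilpotent x.

(* f : R -> S presents S as the quotient ring R/I: f is a surjective ring
   morphism whose kernel is exactly I. *)
Definition is_quotient_map (R S : pzRingType) (I : R -> Prop)
  (f : {rmorphism R -> S}) : Prop :=
  (forall s : S, exists r : R, f r = s) /\ (forall x : R, f x = 0 <-> I x).

(* Main.v *)
From HB Require Import structures.
Require Import Defs.
From mathcomp Require Import all_boot all_algebra.
From mathcomp Require Import ring ring_quotient generic_quotient.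
From mathcomp Require classical_sets.
From Stdlib Require Import Classical ClassicalEpsilon.
Import GRing.Theory.
Local Open Scope ring_scope.

Lemma nil_unit1B (R : pzRingType) (q : R) : is_nilpotent q -> is_unit (1 - q).
Proof.
case=> n qn; exists (\sum_(i < n) q ^+ i).
have H := subrX1 q n; rewrite qn sub0r in H.
have C : GRing.comm q (\sum_(i < n) q ^+ i).
  by apply: commr_sum => i _; exact: commrX.
have E : (1 - q) * (\sum_(i < n) q ^+ i) = 1 by rewrite -opprB mulNr -H opprK.
split=> //.
by rewrite mulrBr mulr1 -C -[X in X - _]mul1r -mulrBl.
Qed.

Lemma nil_unit1D (R : pzRingType) (q : R) : is_nilpotent q -> is_unit (1 + q).
Proof.
case=> n qn; have := @nil_unit1B R (- q); rewrite opprK; apply.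
by exists n; rewrite exprNn qn mulr0.
Qed.

Lemma unit_morph (R S : pzRingType) (f : {rmorphism R -> S}) a :
  is_unit a -> is_unit (f a).
Proof. by case=> b [h1 h2]; exists (f b); rewrite -!rmorphM h1 h2 rmorph1. Qed.

Lemma unit_sides (R : pzRingType) (a b : R) :
  is_unit (a * b) -> is_unit (b * a) -> is_unit a.
Proof.
case=> [u [h1 h2]] [v [h3 h4]]; exists (b * u).
have E : v * b = b * u.
  by rewrite -[v * b]mulr1 -h1 !mulrA -(mulrA v b a) h4 mul1r.
split; first by rewrite mulrA h1.
by rewrite -E -mulrA h4.
Qed.

Lemma unit_lift (R S : pzRingType) (I : R -> Prop) (f : {rmorphism R -> S}) a :
  is_quotient_map I f -> is_nil I -> is_unit (f a) -> is_unit a.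
Proof.
case=> surj ker nilI [b' [h1 h2]]; have [b fb] := surj b'; subst b'.
apply: (@unit_sides _ a b).
  have := @nil_unit1D _ (a * b - 1); rewrite addrCA subrr addr0; apply; apply: nilI.
  by apply/ker; rewrite rmorphB rmorphM rmorph1 h1 subrr.
have := @nil_unit1D _ (b * a - 1); rewrite addrCA subrr addr0; apply; apply: nilI.
by apply/ker; rewrite rmorphB rmorphM rmorph1 h2 subrr.
Qed.

Lemma nil_lift (R S : pzRingType) (I : R -> Prop) (f : {rmorphism R -> S}) x :
  is_quotient_map I f -> is_nil I -> is_nilpotent (f x) -> is_nilpotent x.
Proof.
case=> surj ker nilI [n hn].
have [m hm] : is_nilpotent (x ^+ n) by apply/nilI/ker; rewrite rmorphXn.
by exists (n * m)%N; rewrite exprM.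
Qed.

Lemma GWNC_image (R S : pzRingType) (f : {rmorphism R -> S}) :
  (forall s, exists r, f r = s) -> GWNC R -> GWNC S.
Proof.
move=> surj G s nus; have [r fr] := surj s; subst s.
have [|q [e [[n qn] [ee H]]]] := G r.
  by move=> ur; apply: nus; apply: unit_morph.
exists (f q), (f e); split; first by exists n; rewrite -rmorphXn qn rmorph0.
split; first by rewrite /is_idempotent -rmorphM ee.
by case: H => ->; [left; rewrite rmorphD | right; rewrite rmorphB].
Qed.

Definition nzR (R : pzRingType) (h : (1:R) != 0) : Type := R.
HB.instance Definition _ (R : pzRingType) (h : (1:R) != 0) := GRing.PzRing.on (@nzR R h).
HB.instance Definition _ (R : pzRingType) (h : (1:R) != 0) :=
  GRing.PzSemiRing_isNonZero.Build (@nzR R h) h.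

Lemma intr_comm (R : nzRingType) (x : R) :
  commr_rmorph (GRing.RMorphism.clone _ _ ( *~%R (1:R)) _) x.
Proof. move=> n; exact: commr_int. Qed.

Fixpoint hN (k : nat) : {poly int} :=
  if k is k'.+1 then 3%:R * hN k' ^+ 2 - 2%:R * hN k' ^+ 3 else 'X.

Definition DX : {poly int} := 'X * 'X - 'X.

Lemma hN_prop k : (exists u, hN k * hN k - hN k = DX ^+ (2 ^ k) * u)
                  /\ (exists v, hN k - 'X = DX * v).
Proof.
elim: k => [|k [[u hu] [v hv]]].
  by split; [exists 1; rewrite mulr1 expr1 | exists 0; rewrite subrr mulr0].
have E1 : hN k.+1 * hN k.+1 - hN k.+1 =
   (hN k * hN k - hN k) ^+ 2 * (4%:R * hN k ^+ 2 - 4%:R * hN k - 3%:R).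
  rewrite /=; ring.
have E2 : hN k.+1 - hN k = - (hN k * hN k - hN k) * (2%:R * hN k - 1).
  rewrite /=; ring.
split.
  exists (u ^+ 2 * (4%:R * hN k ^+ 2 - 4%:R * hN k - 3%:R)).
  by rewrite E1 hu expnS mul2n -addnn exprD; ring.
exists (v - DX ^+ (2 ^ k).-1 * u * (2%:R * hN k - 1)).
have -> : hN k.+1 - 'X = (hN k.+1 - hN k) + (hN k - 'X) by ring.
rewrite E2 hu hv.
have -> : DX ^+ (2 ^ k) = DX * DX ^+ (2 ^ k).-1.
  by rewrite -exprS prednK // expn_gt0.
ring.
Qed.

Lemma idem_core_nz (R : nzRingType) (x : R) : is_nilpotent (x * x - x) ->
  exists e w : R, e * e = e /\ e - x = (x * x - x) * w.
Proof.
case=> n hn.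
pose phi := GRing.RMorphism.clone _ _ (horner_morph (intr_comm _ x)) _.
have phiX : phi 'X = x by exact: horner_morphX.
have phiD : phi DX = x * x - x by rewrite /DX rmorphB rmorphM /= phiX.
have [[u hu] [v hv]] := hN_prop n.
exists (phi (hN n)), (phi v); split.
  apply/eqP; rewrite -subr_eq0 -rmorphM -rmorphB hu rmorphM rmorphXn phiD.
  have -> : (2 ^ n = n + (2 ^ n - n))%N by rewrite subnKC // ltnW // ltn_expl.
  by rewrite exprD hn mul0r mul0r.
by rewrite -phiX -rmorphB hv rmorphM phiD phiX.
Qed.

Lemma idem_core (R : pzRingType) (x : R) : is_nilpotent (x * x - x) ->
  exists e w : R, e * e = e /\ e - x = (x * x - x) * w.
Proof.
have [h10|h10] := eqVneq (1 : R) 0.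
  move=> _; have z : forall y : R, y = 0 by move=> y; rewrite -[y]mulr1 h10 mulr0.
  by exists x, 0; rewrite (z (x * x)) (z x) !mulr0 subrr.
exact: (@idem_core_nz (@nzR R h10) x).
Qed.

Lemma exists_maximal (R : pzRingType) (L0 : R -> Prop) :
  is_left_ideal L0 -> ~ L0 1 ->
  exists M, is_maximal_left_ideal M /\ (forall x, L0 x -> M x).
Proof.
move=> [L00 L0B L0M] nL01.
pose P (X : R -> Prop) :=
  (forall x, ~ X x) \/ (is_left_ideal X /\ ~ X 1 /\ forall x, L0 x -> X x).
have Pne : forall X z, P X -> X z -> is_left_ideal X /\ ~ X 1 /\ forall x, L0 x -> X x.
  by move=> X z [/(_ z)//|].
have [|A [PA Amax]] := @classical_sets.Zorn_bigcup R P.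
  move=> F FP Ftot.
  case: (classic (exists X, F X /\ exists z, X z)); last first.
    move=> nE; left=> x [X FX Xx]; apply: nE; by exists X; split; [|exists x].
  move=> [X0 [FX0 [z X0z]]]; right.
  have [[X00 _ _] [_ X0L]] := Pne _ _ (FP _ FX0) X0z.
  split; [split|split].
  - by exists X0.
  - move=> x y [X FX Xx] [Y FY Yy].
    have [[_ XB _] _] := Pne _ _ (FP _ FX) Xx.
    have [[_ YB _] _] := Pne _ _ (FP _ FY) Yy.
    case: (Ftot _ _ FX FY) => [XY|YX].
      by exists Y => //; apply: YB => //; apply: XY.
    by exists X => //; apply: XB => //; apply: YX.
  - move=> r x [X FX Xx]; have [[_ _ XM] _] := Pne _ _ (FP _ FX) Xx.
    by exists X => //; apply: XM.
  - move=> [X FX X1]; have [_ [nX1 _]] := Pne _ _ (FP _ FX) X1; exact: nX1.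
  - by move=> x L0x; exists X0 => //; apply: X0L.
have PL0 : P L0 by right; split; [split|split].
have [z Az] : exists z, A z.
  apply: NNPP => nE; apply: (Amax L0) => //; split.
    by move=> x Ax; exfalso; apply: nE; exists x.
  by move=> sub; have := sub 0 L00; move=> Az; apply: nE; exists 0.
have [[A0 AB AM] [nA1 L0A]] := Pne _ _ PA Az.
exists A; split=> //; split; [by split | by [] | ].
move=> L' [L'0 L'B L'M] AL'.
case: (classic (L' 1)) => [L'1|nL'1].
  by right=> x; rewrite -[x]mulr1; apply: L'M.
case: (classic (forall x, L' x -> A x)) => [|nsub]; first by left.
exfalso; apply: (Amax L'); first by split.
by right; split; [split|split=> // x /L0A /AL'].
Qed.

Lemma swapL (R : pzRingType) (a b c : R) :
  c * (1 - a * b) = 1 -> (1 + b * c * a) * (1 - b * a) = 1.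
Proof.
move=> h.
have E : b * (c * (1 - a * b)) * a = b * a by rewrite h mulr1.
rewrite mulrBr mulr1 mulrBr !mulrBl !mulrA in E.
by rewrite mulrDl mul1r mulrBr mulr1 !mulrA -E subrK.
Qed.

Lemma swapR (R : pzRingType) (a b c : R) :
  (1 - a * b) * c = 1 -> (1 - b * a) * (1 + b * c * a) = 1.
Proof.
move=> h.
have E : b * ((1 - a * b) * c) * a = b * a by rewrite h mulr1.
rewrite mulrBl mul1r mulrBr !mulrBl !mulrA in E.
by rewrite mulrDr mulr1 mulrBl mul1r !mulrA E subrK.
Qed.

Lemma J_left_inv (R : pzRingType) (j : R) : jacobson j ->
  forall r, exists c, c * (1 - r * j) = 1.
Proof.
move=> Jj r; apply: NNPP => nc.
pose L0 y := exists s, y = s * (1 - r * j).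
have [||M [Mmax L0M]] := @exists_maximal R L0.
- split; first by exists 0; rewrite mul0r.
    by move=> _ _ [s1 ->] [s2 ->]; exists (s1 - s2); rewrite mulrBl.
  by move=> r' _ [s ->]; exists (r' * s); rewrite mulrA.
- by move=> [s hs]; apply: nc; exists s; rewrite -hs.
have Mj := Jj M Mmax.
case: Mmax => [[M0 MB MM] nM1 _]; apply: nM1.
have M1 : M (1 - r * j) by apply: L0M; exists 1; rewrite mul1r.
have M2 : M (0 - r * j) by apply: MB => //; apply: MM.
by have := MB _ _ M1 M2; rewrite sub0r opprK subrK.
Qed.

Lemma left_inv_unit (R : pzRingType) (j : R) :
  (forall r, exists c, c * (1 - r * j) = 1) ->
  forall r, exists c, c * (1 - r * j) = 1 /\ (1 - r * j) * c = 1.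
Proof.
move=> H r; have [c hc] := H r; have [d hd] := H (- (c * r)).
have e : 1 - (- (c * r)) * j = c.
  by rewrite mulNr opprK -{1}hc mulrBr mulr1 mulrA subrK.
rewrite e in hd.
have E : d = 1 - r * j by rewrite -[d]mulr1 -{1}hc mulrA hd mul1r.
by exists c; split=> //; rewrite -E hd.
Qed.

Lemma J_char (R : pzRingType) (j : R) :
  (forall r, exists c, c * (1 - r * j) = 1) -> jacobson j.
Proof.
move=> H L [[L0 LB LM] nL1 Lmax]; apply: NNPP => nLj.
pose L' y := exists l s, L l /\ y = l + s * j.
have [||sub|all] := Lmax L'.
- split; first by exists 0, 0; rewrite mul0r addr0.
    move=> _ _ [l1 [s1 [Ll1 ->]]] [l2 [s2 [Ll2 ->]]].
    by exists (l1 - l2), (s1 - s2); split; [apply: LB | rewrite mulrBl opprD addrACA].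
  move=> r _ [l [s [Ll ->]]]; exists (r * l), (r * s); split; first by apply: LM.
  by rewrite mulrDr mulrA.
- by move=> x Lx; exists x, 0; rewrite mul0r addr0.
- by apply: nLj; apply: sub; exists 0, 1; rewrite mul1r add0r.
have [l [s [Ll e]]] := all 1.
have [c hc] := H s.
apply: nL1; rewrite -hc; apply: LM.
by have -> : 1 - s * j = l by rewrite e addrK.
Qed.

Lemma J_ideal (R : pzRingType) : is_ideal (@jacobson R).
Proof.
split.
- by move=> L [[L0 _ _] _ _].
- by move=> x y Jx Jy L ML; case: (ML) => [[_ LB _] _ _]; apply: LB; [apply: Jx|apply: Jy].
- by move=> r x Jx L ML; case: (ML) => [[_ _ LM] _ _]; apply: LM; apply: Jx.
move=> r x Jx; apply: J_char => s.
have [c hc] := @J_left_inv R x Jx (r * s).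
exists (1 + (s * x) * c * r); rewrite [s * (x * r)]mulrA.
by apply: (@swapL R r (s * x) c); rewrite mulrA.
Qed.

Lemma J_zero (R : pzRingType) (j w e : R) : jacobson j -> e = e * (j * w) -> e = 0.
Proof.
move=> Jj he.
have [c [_ hc]] := @left_inv_unit R j (@J_left_inv R j Jj) w.
have := @swapR R w j c hc => h.
by rewrite -[e]mulr1 -h mulrA mulrBr mulr1 -he subrr mul0r.
Qed.

Lemma GWNC_Jnil (R : pzRingType) : GWNC R -> is_nil (@jacobson R).
Proof.
move=> G j Jj.
case: (classic (is_unit j)) => [[y [jy yj]]|nuj].
  have [c hc] := @J_left_inv R j Jj y.
  rewrite yj subrr mulr0 in hc.
  by exists 1%N; rewrite expr1 -[j]mulr1 -hc mulr0.
have [q [e [nq [ee [H|H]]]]] := G j nuj.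
- have [u [hu1 hu2]] := @nil_unit1D R q nq.
  have E : e * (1 + q) = e * j by rewrite H mulrDr mulr1 mulrDr ee addrC.
  have : e = 0.
    apply: (@J_zero R j u) => //.
    by rewrite mulrA -E -mulrA hu1 mulr1.
  by move=> e0; rewrite H e0 addr0.
- have nq' : is_nilpotent (- q) by case: nq => n hn; exists n; rewrite exprNn hn mulr0.
  have [u [hu1 hu2]] := @nil_unit1D R (- q) nq'.
  have E : e * (1 + - q) = e * (- j) by rewrite H mulrDr mulr1 !mulrN mulrBr ee opprB.
  have : e = 0.
    apply: (@J_zero R (- j) u).
      by have [_ JB _ _] := J_ideal R; rewrite -sub0r; apply: JB => //; case: (J_ideal R).
    by rewrite mulrA -E -mulrA hu1 mulr1.
  by move=> e0; rewrite H e0 subr0.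
Qed.

Lemma GWNC_lift (R S : pzRingType) (I : R -> Prop) (f : {rmorphism R -> S}) :
  is_quotient_map I f -> is_nil I -> GWNC S -> GWNC R.
Proof.
move=> qm nilI G a nua.
have nufa : ~ is_unit (f a) by move=> u; apply: nua; exact: (@unit_lift R S I f a qm nilI u).
have [q' [e' [nq' [ee' H]]]] := G _ nufa.
case: (qm) => surj ker.
have [x fx] := surj e'.
have nx : is_nilpotent (x * x - x).
  apply: nilI; apply/ker; by rewrite rmorphB rmorphM fx ee' subrr.
have [e [w [ee hw]]] := @idem_core R x nx.
have fe : f e = e'.
  have : f (e - x) = 0.
    by rewrite hw rmorphM rmorphB rmorphM fx ee' subrr mul0r.
  by rewrite rmorphB fx => /eqP; rewrite subr_eq0 => /eqP.
case: H => H.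
- exists (a - e), e; split; last by split=> //; left; rewrite subrK.
  apply: (@nil_lift R S I f (a - e) qm nilI); by rewrite rmorphB H fe addrK.
- exists (a + e), e; split; last by split=> //; right; rewrite addrK.
  apply: (@nil_lift R S I f (a + e) qm nilI); by rewrite rmorphD H fe subrK.
Qed.
Local Open Scope quotient_scope.

Definition Jb (R : pzRingType) (x : R) : bool :=
  if excluded_middle_informative (jacobson x) then true else false.

Arguments Jb {R}.
Lemma JbP (R : pzRingType) (x : R) : Jb x = true <-> jacobson x.
Proof. by rewrite /Jb; case: excluded_middle_informative. Qed.

Definition Jp (R : pzRingType) : pred R := fun x => Jb x.

Lemma Jp_zmod (R : pzRingType) : zmod_closed (Jp R).
Proof.
have [J0 JB _ _] := J_ideal R.
split; first by rewrite unfold_in /Jp; apply/JbP.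
move=> x y; rewrite !unfold_in /Jp => /JbP Jx /JbP Jy; apply/JbP; exact: JB.
Qed.

HB.instance Definition _ (R : pzRingType) := GRing.isZmodClosed.Build R (Jp R) (Jp_zmod R).

Definition RJ (R : pzRingType) := Quotient.quot (GRing.ZmodClosed.clone R (Jp R) _).
HB.instance Definition _ (R : pzRingType) := GRing.Zmodule.on (RJ R).

Definition piJ (R : pzRingType) (x : R) : RJ R := \pi_(RJ R) x.
Arguments piJ {R}.

Lemma piJ_repr (R : pzRingType) (x : RJ R) : piJ (repr x) = x.
Proof. exact: reprK. Qed.

Lemma RJ_eqE (R : pzRingType) (x y : R) : piJ x = piJ y <-> jacobson (x - y).
Proof.
rewrite /piJ; split.
  by move/eqP; rewrite -Quotient.idealrBE unfold_in /Jp => /JbP.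
by move=> h; apply/eqP; rewrite -Quotient.idealrBE unfold_in /Jp; apply/JbP.
Qed.

Lemma piJD (R : pzRingType) (x y : R) : piJ (x + y) = piJ x + piJ y.
Proof. exact: Quotient.pi_add. Qed.
Lemma piJN (R : pzRingType) (x : R) : piJ (- x) = - piJ x.
Proof. exact: Quotient.pi_opp. Qed.
Lemma piJ0 (R : pzRingType) : piJ (0 : R) = 0.
Proof. by rewrite -[0 : R]subr0 piJD piJN subrr. Qed.

Definition oneJ (R : pzRingType) : RJ R := piJ 1.
Definition mulJ (R : pzRingType) (x y : RJ R) : RJ R := piJ (repr x * repr y).
Arguments mulJ {R}.

Lemma piJM (R : pzRingType) (x y : R) : piJ (x * y) = mulJ (piJ x) (piJ y).
Proof.
rewrite /mulJ; apply/RJ_eqE.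
have [_ JB JL JR] := J_ideal R.
set x' := repr _; set y' := repr _.
have hx : jacobson (x - x') by apply/RJ_eqE; rewrite /x' piJ_repr.
have hy : jacobson (y - y') by apply/RJ_eqE; rewrite /y' piJ_repr.
have -> : x * y - x' * y' = x * (y - y') - (- ((x - x') * y')).
  by rewrite opprK mulrBr mulrBl addrA subrK.
apply: (JB); first exact: (JL).
by rewrite -mulN1r; apply: (JL); apply: (JR).
Qed.

Lemma mulJA (R : pzRingType) (x y z : RJ R) : mulJ x (mulJ y z) = mulJ (mulJ x y) z.
Proof. by rewrite -[x]piJ_repr -[y]piJ_repr -[z]piJ_repr -!piJM mulrA. Qed.
Lemma mul1J (R : pzRingType) (x : RJ R) : mulJ (oneJ R) x = x.
Proof. by rewrite -[x]piJ_repr /oneJ -piJM mul1r. Qed.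
Lemma mulJ1 (R : pzRingType) (x : RJ R) : mulJ x (oneJ R) = x.
Proof. by rewrite -[x]piJ_repr /oneJ -piJM mulr1. Qed.
Lemma mulJDl (R : pzRingType) (x y z : RJ R) : mulJ (x + y) z = mulJ x z + mulJ y z.
Proof. by rewrite -[x]piJ_repr -[y]piJ_repr -[z]piJ_repr -piJD -!piJM -piJD mulrDl. Qed.
Lemma mulJDr (R : pzRingType) (x y z : RJ R) : mulJ x (y + z) = mulJ x y + mulJ x z.
Proof. by rewrite -[x]piJ_repr -[y]piJ_repr -[z]piJ_repr -piJD -!piJM -piJD mulrDr. Qed.

HB.instance Definition _ (R : pzRingType) :=
  GRing.Zmodule_isPzRing.Build (RJ R) (@mulJA R) (@mul1J R) (@mulJ1 R) (@mulJDl R) (@mulJDr R).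

Lemma piJ_zmod (R : pzRingType) : zmod_morphism (@piJ R).
Proof. by move=> x y; rewrite piJD piJN. Qed.
Lemma piJ_mon (R : pzRingType) : monoid_morphism (@piJ R).
Proof. by split=> [|x y] //; rewrite piJM. Qed.

HB.instance Definition _ (R : pzRingType) := GRing.isZmodMorphism.Build R (RJ R) (@piJ R) (@piJ_zmod R).
HB.instance Definition _ (R : pzRingType) := GRing.isMonoidMorphism.Build R (RJ R) (@piJ R) (@piJ_mon R).

Lemma piJ_quot (R : pzRingType) : is_quotient_map (@jacobson R) (@piJ R : {rmorphism R -> RJ R}).
Proof.
split; first by move=> s; exists (repr s); exact: piJ_repr.
by move=> x; change (piJ x = 0 <-> jacobson x); rewrite -(piJ0 R) RJ_eqE subr0.
Qed.

Theorem proposition2p8 :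
  (forall (R : pzRingType) (I : R -> Prop), is_ideal I -> is_nil I ->
     forall (S : pzRingType) (f : {rmorphism R -> S}), is_quotient_map I f ->
       (GWNC R <-> GWNC S))
  /\
  (forall R : pzRingType,
     GWNC R <->
     (is_nil (@jacobson R) /\
      forall (S : pzRingType) (f : {rmorphism R -> S}),
        is_quotient_map (@jacobson R) f -> GWNC S)).
Proof.
split.
- move=> R I idI nilI S f qm; split.
    by apply: (@GWNC_image R S f); case: qm.
  exact: (@GWNC_lift R S I f qm nilI).
- move=> R; split.
    move=> G; split; first exact: (@GWNC_Jnil R G).
    by move=> S f [surj _]; exact: (@GWNC_image R S f surj G).
  move=> [nilJ H].
  apply: (@GWNC_lift R (RJ R) (@jacobson R) (@piJ R : {rmorphism R -> RJ R}) (piJ_quot R) nilJ).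
  apply: H; exact: piJ_quot.
Qed.
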